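(* Let $(A,S_A)$ and $(B,S_B)$ be de Vries algebras and let $T\colon(A,S_A)\to(B,S_B)$ and $Q\colon(B,S_B)\to(A,S_A)$ be mutually inverse isomorphisms in $\mathsf{DeV^S}$. Define $f\colon A\to B$ and $g\colon B\to A$ by $f(a)=\bigwedge T[a]$ and $g(b)=\bigwedge Q[b]$. Then $f$ and $g$ are mutually inverse boolean isomorphisms satisfying $a\mathrel{S_A}a'\iff f(a)\mathrel{S_B}f(a')$ (and similarly for $g$), and for all $a\in A$, $b\in B$: $a\mathrel{T}b\iff f(a)\mathrel{S_B}b$ and $b\mathrel{Q}a\iff g(b)\mathrel{S_A}a$.
   Context: A de Vries algebra is a pair $(B,S)$ with $B$ a complete boolean algebra and $S\subseteq B\times B$ satisfying (S1) $0\mathrel{S}0$, $1\mathrel{S}1$; (S2) $a,b\mathrel{S}c\Rightarrow(a\vee b)\mathrel{S}c$; (S3) $a\mathrel{S}c,d\Rightarrow a\mathrel{S}(c\wedge d)$; (S4) $a\le b\mathrel{S}c\le d\Rightarrow a\mathrel{S}d$; (S5) $a\mathrel{S}b\Rightarrow a\le b$; (S6) $a\mathrel{S}b\Rightarrow\neg b\mathrel{S}\neg a$; (S7) $a\mathrel{S}b\Rightarrow\exists c\,(a\mathrel{S}c\mathrel{S}b)$; (S8) $a\ne0\Rightarrow\exists b\ne0,\ b\mathrel{S}a$. $\mathsf{DeV^S}$: objects de Vries algebras; morphisms $(A,S_A)\to(B,S_B)$ are relations $T\subseteq A\times B$ satisfying (S1)–(S4) and $T\circ S_A=T=S_B\circ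 T$; identity on $(A,S_A)$ is $S_A$; composition is relational composition. $T[a]=\{b\mid a\mathrel{T}b\}$. *)

(* Defs.v *)
(* boolean algebras as complemented distributive lattices
   with top and bottom (ctbDistrLatticeType). *)
From HB Require Import structures.
From mathcomp Require Import all_boot all_order.
From Stdlib Require Import ClassicalEpsilon.
Set Implicit Arguments. Unset Strict Implicit. Unset Printing Implicit Defensive.
Import Order.Theory.
Local Open Scope order_scope.

Section DeVries.
Context {d : Order.disp_t}.

Definition is_glb {B : ctbDistrLatticeType d} (P : B -> Prop) (m : B) : Prop :=
  (forall x, P x -> m <= x) /\ (forall y, (forall x, P x -> y <= x) -> y <= m).

Definition complete (B : ctbDistrLatticeType d) : Prop :=
  forall P : B -> Prop, exists m, is_glb P m.

Definition bigmeet {B : ctbDistrLatticeType d} (P : B -> Prop) : B :=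
  epsilon (inhabits (\bot : B)) (is_glb P).

Definition S1to4 {dA dB : Order.disp_t} {A : ctbDistrLatticeType dA}
  {B : ctbDistrLatticeType dB} (T : A -> B -> Prop) : Prop :=
  [/\ T \bot \bot /\ T \top \top,
      (forall a b c, T a c -> T b c -> T (a `|` b) c),
      (forall a c e, T a c -> T a e -> T a (c `&` e)) &
      (forall a b c e, a <= b -> T b c -> c <= e -> T a e)].

End DeVries.

Definition rcomp {X Y Z : Type} (R2 : Y -> Z -> Prop) (R1 : X -> Y -> Prop) :
  X -> Z -> Prop := fun x z => exists y, R1 x y /\ R2 y z.

Definition rel_eq {X Y : Type} (R R' : X -> Y -> Prop) : Prop :=
  forall x y, R x y <-> R' x y.

Definition deVries {d : Order.disp_t} (B : ctbDistrLatticeType d)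
  (S : B -> B -> Prop) : Prop :=
  complete B /\
  S1to4 S /\
  (forall a b, S a b -> a <= b) /\
  (forall a b, S a b -> S (~` b) (~` a)) /\
  (forall a b, S a b -> exists c, S a c /\ S c b) /\
  (forall a, a != \bot -> exists b, b != \bot /\ S b a).

Definition devS_morph {dA dB : Order.disp_t} {A : ctbDistrLatticeType dA}
  {B : ctbDistrLatticeType dB} (SA : A -> A -> Prop) (SB : B -> B -> Prop)
  (T : A -> B -> Prop) : Prop :=
  [/\ S1to4 T, rel_eq (rcomp T SA) T & rel_eq (rcomp SB T) T].

Definition bool_hom {dA dB : Order.disp_t} {A : ctbDistrLatticeType dA}
  {B : ctbDistrLatticeType dB} (f : A -> B) : Prop :=
  [/\ f \bot = \bot, f \top = \top,
      (forall x y, f (x `&` y) = f x `&` f y),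
      (forall x y, f (x `|` y) = f x `|` f y) &
      (forall x, f (~` x) = ~` f x)].

(* Main.v *)
Require Import Defs.
From mathcomp Require Import all_boot all_order.
From Stdlib Require Import ClassicalEpsilon FunctionalExtensionality PropExtensionality.
Import Order.Theory.
Local Open Scope order_scope.

Lemma bigmeet_glb {d : Order.disp_t} {B : ctbDistrLatticeType d} {P : B -> Prop} :
  complete B -> is_glb P (bigmeet P).
Proof.
move=> HC; rewrite /bigmeet; apply: epsilon_spec; exact: HC.
Qed.

Lemma glb_unique {d : Order.disp_t} {B : ctbDistrLatticeType d} {P : B -> Prop} {m m'} :
  is_glb P m -> is_glb P m' -> m = m'.
Proof.
move=> [H1 H2] [H3 H4]; apply/le_anti/andP; split; [exact: H4 | exact: H2].
Qed.

Lemma glb_S {d : Order.disp_t} (B : ctbDistrLatticeType d) (S : B -> B -> Prop) a :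
  deVries S -> is_glb (S a) a.
Proof.
move=> [_ [[_ _ _ S4] [S5 [S6 [_ S8]]]]]; split; first by move=> x /S5.
move=> m Hm.
have [/eqP E|NE] := boolP (m `&` ~` a == \bot); first by move/eqP: E; rewrite disj_leC complK.
have [z [zn zS]] := S8 _ NE.
have Sz : S a (~` z).
  apply: (S4 _ _ _ _ _ (S6 _ _ zS)); last exact: lexx.
  by rewrite lexC leIr.
have h1 := Hm _ Sz.
have h2 : z <= m by apply: le_trans (S5 _ _ zS) (leIl _ _).
have : z <= \bot by rewrite -(meetxC z) lexI lexx (le_trans h2 h1).
by rewrite lex0 (negbTE zn).
Qed.

Section Gen.
Context {dA dB : Order.disp_t} {A : ctbDistrLatticeType dA}
  {B : ctbDistrLatticeType dB}
  (SA : A -> A -> Prop) (SB : B -> B -> Prop)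
  (T : A -> B -> Prop) (Q : B -> A -> Prop).
Hypotheses (HA : deVries SA) (HB : deVries SB) (HT : devS_morph SA SB T)
  (HQ : devS_morph SB SA Q) (HQT : rel_eq (rcomp Q T) SA)
  (HTQ : rel_eq (rcomp T Q) SB).

Lemma T0 u : T u \bot -> u = \bot.
Proof.
move=> H.
have [[[Q1 _] _ _ _] _ _] := HQ.
have [_ [_ [S5 _]]] := HA.
have : SA u \bot by apply/HQT; exists \bot.
by move/S5; rewrite lex0 => /eqP.
Qed.

Lemma Q0 u : Q u \bot -> u = \bot.
Proof.
move=> H.
have [[[T1 _] _ _ _] _ _] := HT.
have [_ [_ [S5 _]]] := HB.
have : SB u \bot by apply/HTQ; exists \bot.
by move/S5; rewrite lex0 => /eqP.
Qed.

Lemma DT_r x c a2 : Q (~` c) a2 -> x <= ~` a2 -> T x c.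
Proof.
move=> Hq Hx.
have [[_ _ _ T4] _ _] := HT.
have [[_ _ Q3 Q4] _ HQr] := HQ.
have [_ [_ [_ [S6 _]]]] := HA.
have [_ [_ [S5B _]]] := HB.
have [a3 [Hq3 Ha3]] := (proj2 (HQr _ _) Hq).
have [b [Htb Hbq]] := proj2 (HQT _ _) (S6 _ _ Ha3).
have E : ~` c `&` b = \bot.
  have h1 : Q (~` c `&` b) a3 := Q4 _ _ _ _ (leIl _ _) Hq3 (lexx _).
  have h2 : Q (~` c `&` b) (~` a3) := Q4 _ _ _ _ (leIr _ _) Hbq (lexx _).
  by have := Q3 _ _ _ h1 h2; rewrite meetxC => /Q0.
apply: (T4 _ _ _ _ Hx Htb).
by move/eqP: E; rewrite meetC disj_leC complK.
Qed.

Lemma DT_l x c : T x c -> exists a2, Q (~` c) a2 /\ x <= ~` a2.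
Proof.
move=> H.
have [[_ _ T3 T4] _ HTr] := HT.
have [_ [_ [_ [S6B _]]]] := HB.
have [c' [Hc' Hcc]] := proj2 (HTr _ _) H.
have [a2 [Hq Ha2]] := proj2 (HTQ _ _) (S6B _ _ Hcc).
exists a2; split => //.
have E : x `&` a2 = \bot.
  have h1 : T (x `&` a2) c' := T4 _ _ _ _ (leIl _ _) Hc' (lexx _).
  have h2 : T (x `&` a2) (~` c') := T4 _ _ _ _ (leIr _ _) Ha2 (lexx _).
  by have := T3 _ _ _ h1 h2; rewrite meetxC => /T0.
by move/eqP: E; rewrite disj_leC.
Qed.

Lemma PT a b : T a b <-> SB (bigmeet (T a)) b.
Proof.
have [CA [[_ _ _ S4A] [S5A [S6A [_ S8A]]]]] := HA.
have [CB [[_ _ _ S4B] [S5B [S6B _]]]] := HB.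
have [[_ _ T3 T4] _ HTr] := HT.
have [[_ _ Q3 Q4] _ _] := HQ.
have [G1 G2] := bigmeet_glb (P:=T a) CB.
split.
  move=> H; have [c' [Hc' Hcc]] := proj2 (HTr _ _) H.
  exact: (S4B _ _ _ _ (G1 _ Hc') Hcc (lexx _)).
move=> H.
set m := bigmeet (T a) in G1 G2 H *.
have [a1 [Hq Ha1]] := proj2 (HTQ _ _) (S6B _ _ H).
suff E : a `&` a1 = \bot.
  by apply: (DT_r a b a1 Hq); move/eqP: E; rewrite disj_leC.
apply/eqP; apply/negPn/negP => NE.
have [z [zn zS]] := S8A _ NE.
have [y [Hzy Hyq]] := proj2 (HQT _ _) zS.
have yn : y != \bot by apply/eqP => Ey; move: Hzy; rewrite Ey => /T0 /eqP; apply/negP.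
have key : forall c, T (a `&` a1) c -> y <= c.
  move=> c Hc; have [a2 [Hq2 Ha2]] := DT_l (a `&` a1) c Hc.
  have E : y `&` ~` c = \bot.
    have h1 : Q (y `&` ~` c) (a `&` a1) := Q4 _ _ _ _ (leIl _ _) Hyq (lexx _).
    have h2 : Q (y `&` ~` c) a2 := Q4 _ _ _ _ (leIr _ _) Hq2 (lexx _).
    have := Q3 _ _ _ h1 h2.
    by move: Ha2; rewrite -disj_leC => /eqP -> /Q0.
  by move/eqP: E; rewrite disj_leC complK.
have h1 : y <= m.
  apply: G2 => c Hc; apply: key; apply: (T4 _ a) => //; by rewrite ?leIl ?lexx.
have h2 : y <= ~` m.
  apply: key; apply: (T4 _ a1) => //; by rewrite ?leIr ?lexx.
have : y <= \bot by rewrite -(meetxC m) lexI h1 h2.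
by rewrite lex0 (negbTE yn).
Qed.

Lemma mono_f x y : x <= y -> bigmeet (T x) <= bigmeet (T y).
Proof.
have [CA _] := HA. have [CB _] := HB.
have [[_ _ _ T4] _ _] := HT.
move=> Hxy.
have [G1 G2] := bigmeet_glb (P:=T x) CB.
have [G3 G4] := bigmeet_glb (P:=T y) CB.
apply: G4 => c Hc; apply: G1; exact: (T4 _ _ _ _ Hxy Hc (lexx _)).
Qed.

Lemma cancel_fg a : bigmeet (Q (bigmeet (T a))) = a.
Proof.
have [CA [_ [_ [_ _]]]] := HA.
have [_ HQS _] := HQ.
apply: (glb_unique (bigmeet_glb (P:=Q (bigmeet (T a))) CA)).
have -> : Q (bigmeet (T a)) = SA a.
  apply: functional_extensionality_dep => a''.
  apply: propositional_extensionality; split.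
    move=> H; have [b [Hs Hb]] := proj2 (HQS _ _) H.
    by apply/HQT; exists b; split => //; apply/PT.
  move=> H; have [b [Hb Hq]] := proj2 (HQT _ _) H.
  by apply/HQS; exists b; split => //; apply/PT.
exact: glb_S.
Qed.

End Gen.

Lemma presS {dA dB : Order.disp_t} {A : ctbDistrLatticeType dA}
  {B : ctbDistrLatticeType dB}
  (SA : A -> A -> Prop) (SB : B -> B -> Prop)
  (T : A -> B -> Prop) (Q : B -> A -> Prop) :
  deVries SA -> deVries SB -> devS_morph SA SB T -> devS_morph SB SA Q ->
  rel_eq (rcomp Q T) SA -> rel_eq (rcomp T Q) SB ->
  (forall b, bigmeet (T (bigmeet (Q b))) = b) ->
  forall a a', SA a a' -> SB (bigmeet (T a)) (bigmeet (T a')).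
Proof.
move=> HA HB HT HQ HQT HTQ cgf a a' H.
have [CA _] := HA. have [CB [[_ _ _ S4B] _]] := HB.
have [b [Hab Hba]] := proj2 (HQT _ _) H.
have h1 := proj1 (PT _ _ _ _ HA HB HT HQ HQT HTQ a b) Hab.
have [G1 _] := bigmeet_glb (P:=Q b) CA.
have h2 := mono_f _ _ _ HA HB HT _ _ (G1 _ Hba).
rewrite cgf in h2.
exact: (S4B _ _ _ _ (lexx _) h1 h2).
Qed.

Lemma iso_hom {dA dB : Order.disp_t} {A : ctbDistrLatticeType dA}
  {B : ctbDistrLatticeType dB} (f : A -> B) (g : B -> A) :
  cancel f g -> cancel g f -> {homo f : x y / x <= y} -> {homo g : x y / x <= y} ->
  bool_hom f.
Proof.
move=> fK gK mf mg.
have bot : f \bot = \bot.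
  by apply/eqP; rewrite -lex0 -(gK \bot) mf // le0x.
have top : f \top = \top.
  by apply/le_anti; rewrite lex1 -(gK \top) mf // lex1.
have meet : forall x y, f (x `&` y) = f x `&` f y.
  move=> x y; apply/le_anti/andP; split.
    by rewrite lexI !mf // ?leIl ?leIr.
  rewrite -[X in X <= _]gK; apply: mf; rewrite lexI; apply/andP; split;
    rewrite -[X in _ <= X]fK; apply: mg; [exact: leIl | exact: leIr].
have join : forall x y, f (x `|` y) = f x `|` f y.
  move=> x y; apply/le_anti/andP; split; last first.
    by rewrite leUx !mf // ?leUl ?leUr.
  rewrite -[X in _ <= X]gK; apply: mf; rewrite leUx; apply/andP; split;
    rewrite -[X in X <= _]fK; apply: mg; [exact: leUl | exact: leUr].
split => // x.
apply/le_anti/andP; split.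
  by rewrite -disj_leC meetC -meet meetxC bot.
have E : f x `|` f (~` x) = \top by rewrite -join joinxC top.
by rewrite -[X in X <= _]meetx1 -E meetUr meetCx join0x leIr.
Qed.

Theorem lemma5p3 (dA dB : Order.disp_t)
  (A : ctbDistrLatticeType dA) (B : ctbDistrLatticeType dB)
  (SA : A -> A -> Prop) (SB : B -> B -> Prop)
  (T : A -> B -> Prop) (Q : B -> A -> Prop) :
  deVries SA -> deVries SB ->
  devS_morph SA SB T -> devS_morph SB SA Q ->
  rel_eq (rcomp Q T) SA -> rel_eq (rcomp T Q) SB ->
  let f := fun a : A => bigmeet (T a) in
  let g := fun b : B => bigmeet (Q b) in
  cancel f g /\ cancel g f /\ bool_hom f /\ bool_hom g /\
  (forall a a', SA a a' <-> SB (f a) (f a')) /\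
  (forall b b', SB b b' <-> SA (g b) (g b')) /\
  (forall a b, T a b <-> SB (f a) b) /\
  (forall b a, Q b a <-> SA (g b) a).
Proof.
move=> HA HB HT HQ HQT HTQ f g.
have cfg : cancel f g := cancel_fg _ _ _ _ HA HB HT HQ HQT HTQ.
have cgf : cancel g f := cancel_fg _ _ _ _ HB HA HQ HT HTQ HQT.
have mf : {homo f : x y / x <= y} := fun x y => mono_f _ _ _ HA HB HT x y.
have mg : {homo g : x y / x <= y} := fun x y => mono_f _ _ _ HB HA HQ x y.
have sf := presS _ _ _ _ HA HB HT HQ HQT HTQ cgf.
have sg := presS _ _ _ _ HB HA HQ HT HTQ HQT cfg.
split => //; split => //; split; first exact: iso_hom cfg cgf mf mg.
split; first exact: iso_hom cgf cfg mg mf.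
split.
  move=> a a'; split; first exact: sf.
  by move=> H; rewrite -(cfg a) -(cfg a'); exact: sg _ _ H.
split.
  move=> b b'; split; first exact: sg.
  by move=> H; rewrite -(cgf b) -(cgf b'); exact: sf _ _ H.
split; [exact: PT _ _ _ _ HA HB HT HQ HQT HTQ | exact: PT _ _ _ _ HB HA HQ HT HTQ HQT].
Qed.
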